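(* Let $0<\alpha\le 1$. There exists $n_0(\alpha)$ such that the following holds for all integers $n\ge n_0(\alpha)$ and $m\in\mathbb{N}$ with $\alpha n\le m\le n/2$. Let $G$ be a digraph on $n$ vertices with $\delta^0(G)\ge \delta n$, where $0<\delta<1$. Then there exists a vertex subset $W\subseteq V(G)$ with $|W|=m$ such that \[ \frac{\delta^0(G[W])}{m}\ \ge\ \delta-2n^{-1/3}\quad\text{and}\quad \frac{\delta^0(G\setminus W)}{n-m}\ \ge\ \delta-2n^{-1/3}. \]
   Context: For a digraph $G$, $d^+(v)$ and $d^-(v)$ denote the out-degree and in-degree of a vertex $v$, and $\delta^0(G)=\min\{d^+(v),d^-(v):v\in V(G)\}$ is the minimum semi-degree. For $W\subseteq V(G)$, $G[W]$ is the subdigraph induced on $W$, and $G\setminus W$ denotes $G[V(G)\setminus W]$. *)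

(* Defs.v *)
From mathcomp Require Import all_boot.
From Stdlib Require Import Reals.
Set Implicit Arguments. Unset Strict Implicit. Unset Printing Implicit Defensive.

(* A digraph on n vertices: vertex set 'I_n, arc relation E (E u v = arc u->v),
   loopless (irreflexive); antiparallel arcs allowed, no multi-arcs. *)
Definition loopless (n : nat) (E : rel 'I_n) : Prop := forall v, ~~ E v v.

Definition outdeg_in (n : nat) (E : rel 'I_n) (W : {set 'I_n}) (v : 'I_n) : nat :=
  #|[set u in W | E v u]|.
Definition indeg_in (n : nat) (E : rel 'I_n) (W : {set 'I_n}) (v : 'I_n) : nat :=
  #|[set u in W | E u v]|.

(* minimum semi-degree delta^0(G[W]) (conventionally 0 if W is empty;
   #|W| is an upper bound for all degrees so it serves as the neutral value) *)
Definition semideg (n : nat) (E : rel 'I_n) (W : {set 'I_n}) : nat :=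
  \big[minn/#|W|]_(v in W) minn (outdeg_in E W v) (indeg_in E W v).

(* Main.v *)
Require Import Defs.
From mathcomp Require Import all_boot.
From mathcomp Require Import zify.
From Stdlib Require Import Reals Lra Lia ZArith.
Import ssrnat.
Set Implicit Arguments. Unset Strict Implicit. Unset Printing Implicit Defensive.
Lemma card_exists_le (I T : finType) (P : I -> T -> bool) :
  #|[set x | [exists i, P i x]]| <= \sum_i #|[set x | P i x]|.
Proof.
rewrite -sum1_card.
have -> : \sum_i #|[set x | P i x]| = \sum_i \sum_x (P i x : nat).
  apply: eq_bigr => i _; rewrite -sum1_card big_mkcond /=.
  by apply: eq_bigr => x _; rewrite inE; case: (P i x).
rewrite exchange_big /= [X in _ <= X](bigID (fun x => x \in [set x | [exists i, P i x]])) /=.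
apply: leq_trans (leq_addr _ _).
apply: leq_sum => x; rewrite inE => /existsP [i Hi].
by rewrite (bigD1 i) //= Hi.
Qed.

Lemma arith1 (n a m k J : nat) : k < a -> k < m -> a <= n -> m * a + n * J < n * k ->
  (a - k) * (m - k) + n * J <= k.+1 * (n - a - (m - k.+1)).
Proof.
move=> ka km an hnk.
have [u hu] : exists u, a = k + u by exists (a - k); timeout 20 lia.
have [w hw] : exists w, m = k + w by exists (m - k); timeout 20 lia.
subst.
have hn : k + u + w <= n.
  rewrite leqNgt; apply/negP => h.
  have : n * k <= (k + w) * (k + u).
    have -> : (k + w) * (k + u) = k * (k + u + w) + w * u by rewrite !mulnDl !mulnDr; timeout 20 lia.
    apply: leq_trans (leq_addr _ _); rewrite mulnC leq_mul2l; apply/orP; right; timeout 20 lia.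
  timeout 20 lia.
have [e he] : exists e, n = k + u + w + e by exists (n - (k + u + w)); timeout 20 lia.
subst.
have -> : k + u + w + e - (k + u) - (k + w - k.+1) = e + 1 by timeout 20 lia.
have -> : k + u - k = u by timeout 20 lia.
have -> : k + w - k = w by timeout 20 lia.
move: hnk; rewrite !mulnDl !mulnDr. timeout 20 lia.
Qed.

Lemma arith2 n J N : J <= n -> N <= n * n -> 2 * n * N <= (N + n * J) * (2 * n - J).
Proof.
move=> Jn Nn.
have [t ht] : exists t, n = J + t by exists (n - J); lia.
subst.
have -> : 2 * (J + t) - J = J + 2 * t by lia.
have h : J * N <= J * ((J + t) * (J + 2 * t)).
  rewrite leq_mul2l; apply/orP; right; apply: (leq_trans Nn).
  rewrite leq_mul2l; apply/orP; right; lia.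
move: h; rewrite !mulnDl !mulnDr !mulnA. lia.
Qed.

Lemma lexp m1 m2 e : m1 <= m2 -> m1 ^ e <= m2 ^ e.
Proof. by move=> h; elim: e => [|e IH] //; rewrite !expnS leq_mul. Qed.

Section Tail.
Variables (n m J : nat) (A : {set 'I_n}).
Let a := #|A|.
Let b := #|~: A|.
Definition fk k := 'C(a, k) * 'C(b, m - k).

Lemma ab : a + b = n.
Proof. by rewrite /a /b cardsC card_ord. Qed.

Lemma L1 k : #|[set W : {set 'I_n} | (#|W| == m) && (#|W :&: A| == k)]| <= fk k.
Proof.
pose D := setX [set B : {set 'I_n} | B \subset A & #|B| == k]
               [set C : {set 'I_n} | C \subset ~: A & #|C| == m - k].
apply: (@leq_trans #|(fun p : {set 'I_n} * {set 'I_n} => p.1 :|: p.2) @: D|).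
  apply: subset_leq_card; apply/subsetP => W; rewrite inE => /andP [/eqP HW /eqP Hk].
  apply/imsetP; exists (W :&: A, W :\: A); last by rewrite /= setID.
  rewrite !inE subsetIr Hk eqxx /=.
  apply/andP; split.
    by apply/subsetP => x; rewrite !inE => /andP [-> _].
  by rewrite -HW -(cardsID A W) Hk addKn.
apply: leq_trans (leq_imset_card _ _) _.
by rewrite cardsX !cards_draws.
Qed.

Lemma L2 k : k <= m -> fk k <= 'C(n, m).
Proof.
move=> km; rewrite -ab -Vandermonde (bigD1 (Ordinal (km : k < m.+1))) //=.
exact: leq_addr.
Qed.

Lemma L3 k : k < m -> fk k.+1 * (k.+1 * (b - (m - k.+1))) = fk k * ((a - k) * (m - k)).
Proof.
move=> km.
have e1 : (a - k) * 'C(a, k) = k.+1 * 'C(a, k.+1) by rewrite -mul_bin_down mul_bin_diag.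
have e2 : (b - (m - k.+1)) * 'C(b, m - k.+1) = (m - k.+1).+1 * 'C(b, (m - k.+1).+1)
  by rewrite -mul_bin_down mul_bin_diag.
have e3 : (m - k.+1).+1 = m - k by timeout 20 lia.
rewrite e3 in e2.
rewrite /fk.
transitivity (((k.+1) * 'C(a, k.+1)) * ((b - (m - k.+1)) * 'C(b, m - k.+1))).
  by rewrite !mulnA; timeout 20 lia.
rewrite e2 -e1; timeout 20 lia.
Qed.
Hypotheses (n0 : 0 < n) (Jn : J <= n) (mn : m <= n).
Definition k1 := m * a %/ n + J + 1.

Lemma L4 k : k1 <= k -> k < m -> fk k.+1 * (2 * n) <= fk k * (2 * n - J).
Proof.
move=> hk km.
have abn := ab.
case: (leqP a k) => ka.
  by rewrite /fk (bin_small (n := a)) ?mul0n //; timeout 20 lia.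
have hc : m * a < (m * a %/ n).+1 * n := ltn_ceil _ n0.
have hnk : m * a + n * J < n * k.
  move: hc hk; rewrite /k1; move: (m * a %/ n) => q hc hk.
  have : (q + J + 1) * n <= k * n by rewrite leq_mul2r hk orbT.
  timeout 20 nia.
set D := k.+1 * (b - (m - k.+1)).
set N := (a - k) * (m - k).
have HD : N + n * J <= D.
  rewrite /D /N.
  have hb : b = n - a by timeout 20 lia.
  rewrite hb.
  by apply: arith1 => //; timeout 20 lia.
have HN : N <= n * n by rewrite /N; apply: leq_mul; timeout 20 lia.
have key : 2 * n * N <= D * (2 * n - J).
  apply: (@leq_trans ((N + n * J) * (2 * n - J))); last by apply: leq_mul.
  exact: arith2.
have Dpos : 0 < D.
  have : 0 < N by rewrite /N muln_gt0; apply/andP; split; lia.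
  move: HD; move: (n * J) => x; lia.
have := L3 km; rewrite -/D -/N => E.
rewrite -(leq_pmul2r Dpos).
have -> : fk k.+1 * (2 * n) * D = 2 * n * (fk k.+1 * D) by rewrite mulnAC mulnC.
rewrite E.
have -> : 2 * n * (fk k * N) = fk k * (2 * n * N) by rewrite mulnCA.
rewrite -[fk k * _ * D]mulnA; apply: leq_mul => //.
move: key. rewrite mulnC (mulnC D). done.
Qed.
Lemma L5 j : k1 + j <= m -> fk (k1 + j) * (2 * n) ^ j <= fk k1 * (2 * n - J) ^ j.
Proof.
elim: j => [|j IH] h; first by rewrite addn0 !expn0.
have h1 : k1 + j <= m by lia.
have h2 : k1 + j < m by rewrite -addnS.
have := L4 (leq_addr j k1) h2; rewrite -addnS => H.
rewrite !expnS.
apply: (@leq_trans (fk (k1 + j) * (2 * n - J) * (2 * n) ^ j)).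
  by rewrite mulnA; exact: leq_mul H (leqnn _).
rewrite mulnAC [X in _ <= X]mulnCA [X in _ <= X]mulnC.
exact: leq_mul (IH h1) (leqnn _).
Qed.

Lemma L6 k : k1 + J <= k -> k <= m -> fk k * (2 * n) ^ J <= 'C(n, m) * (2 * n - J) ^ J.
Proof.
move=> h1 h2.
have := L5 (j := k - k1); rewrite subnKC; last by lia.
move=> /(_ h2) H.
have e : k - k1 = J + (k - k1 - J) by lia.
rewrite e !expnD in H.
have p : 0 < (2 * n) ^ (k - k1 - J) by rewrite expn_gt0; lia.
rewrite -(leq_pmul2r p) -mulnA (leq_trans H) //.
rewrite mulnA; apply: leq_mul; last exact: lexp (leq_subr _ _).
apply: leq_mul => //; apply: L2; lia.
Qed.

Lemma L7 : #|[set W : {set 'I_n} | (#|W| == m) && (k1 + J <= #|W :&: A|)]| * (2 * n) ^ J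
   <= m.+1 * ('C(n, m) * (2 * n - J) ^ J).
Proof.
pose P (k : 'I_m.+1) (W : {set 'I_n}) := (#|W| == m) && (k1 + J <= k) && (#|W :&: A| == k).
apply: (@leq_trans (#|[set W | [exists k, P k W]]| * (2 * n) ^ J)).
  rewrite leq_mul2r; apply/orP; right; apply: subset_leq_card; apply/subsetP => W.
  rewrite !inE => /andP [/eqP hW hk].
  have hk' : #|W :&: A| < m.+1 by rewrite ltnS -hW subset_leq_card // subsetIl.
  apply/existsP; exists (Ordinal hk'); rewrite /P /= hW eqxx hk /=. done.
apply: (@leq_trans ((\sum_k #|[set W | P k W]|) * (2 * n) ^ J)).
  by rewrite leq_mul2r card_exists_le orbT.
rewrite big_distrl /=.
rewrite (_ : m.+1 * _ = \sum_(k < m.+1) ('C(n, m) * (2 * n - J) ^ J)); last by rewrite sum_nat_const card_ord.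
apply: leq_sum => k _.
case: (leqP (k1 + J) k) => hk.
  apply: leq_trans (L6 hk _); last by rewrite -ltnS.
  rewrite leq_mul2r; apply/orP; right.
  apply: leq_trans (L1 k); apply: subset_leq_card; apply/subsetP => W.
  by rewrite !inE /P hk andbT.
rewrite (_ : #|_| = 0) // ; apply: eq_card0 => W; rewrite !inE /P.
by rewrite leqNgt hk andbF.
Qed.
End Tail.
Definition fam (n : nat) (E : rel 'I_n) (i : 'I_n * bool * bool) : {set 'I_n} :=
  let: (v, b1, b2) := i in
  let N := if b1 then [set u | E v u] else [set u | E u v] in
  if b2 then N else ~: N.

Lemma exists_good (n m J : nat) (E : rel 'I_n) :
  0 < n -> m <= n -> J <= n -> 4 * n * m.+1 * (2 * n - J) ^ J < (2 * n) ^ J ->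
  exists W : {set 'I_n}, #|W| = m /\
    forall i, n * #|W :&: fam E i| <= m * #|fam E i| + 2 * n * J.
Proof.
move=> n0 mn Jn H.
pose bad := [set W : {set 'I_n} | [exists i, (#|W| == m) &&
     (k1 m J (fam E i) + J <= #|W :&: fam E i|)]].
have Cpos : 0 < 'C(n, m) by rewrite bin_gt0.
have hb : #|bad| < 'C(n, m).
  have Hp : 0 < (2 * n) ^ J by rewrite expn_gt0; lia.
  rewrite -(ltn_pmul2r Hp).
  apply: (@leq_ltn_trans ((\sum_i #|[set W : {set 'I_n} | (#|W| == m) &&
     (k1 m J (fam E i) + J <= #|W :&: fam E i|)]|) * (2 * n) ^ J)).
    by rewrite leq_mul2r card_exists_le orbT.
  rewrite big_distrl /=.
  apply: (@leq_ltn_trans (\sum_(i : 'I_n * bool * bool) (m.+1 * ('C(n, m) * (2 * n - J) ^ J)))).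
    by apply: leq_sum => i _; apply: L7.
  rewrite sum_nat_const !card_prod card_ord card_bool.
  move: H; rewrite -(ltn_pmul2l Cpos).
  move: ('C(n, m)) ((2 * n - J) ^ J) ((2 * n) ^ J) => c x y.
  have -> : n * 2 * 2 * (m.+1 * (c * x)) = c * (4 * n * m.+1 * x) by lia.
  by rewrite mulnC.
have : ~~ ([set W : {set 'I_n} | #|W| == m] \subset bad).
  apply/negP => /subset_leq_card; rewrite card_draws card_ord leqNgt hb //.
case/subsetPn => W; rewrite !inE => /eqP hW hWb.
exists W; split => // i.
have hi : #|W :&: fam E i| < k1 m J (fam E i) + J.
  rewrite ltnNge; apply: contra hWb => h; apply/existsP; exists i; rewrite hW eqxx h //.
move: hi; rewrite /k1.
have := leq_divM (m * #|fam E i|) n.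
move: (m * #|fam E i| %/ n) => q.
move: (#|W :&: fam E i|) (m * #|fam E i|) => x y h1 h2.
have : x <= q + 2 * J by lia.
move=> h3; apply: (@leq_trans (n * (q + 2 * J))); first by rewrite leq_mul2l h3 orbT.
rewrite mulnDr; lia.
Qed.
Open Scope R_scope.

Lemma floorR x : 0 <= x -> exists J : nat, INR J <= x < INR J + 1.
Proof.
intros hx. destruct (archimed x) as [h1 h2].
assert (hu : (1 <= up x)%Z).
{ assert (0 < IZR (up x)) by lra. apply lt_IZR in H. lia. }
exists (Z.to_nat (up x - 1)).
rewrite INR_IZR_INZ Z2Nat.id; last lia. rewrite minus_IZR /=. lra.
Qed.

Lemma exp_pow_nat x k : exp x ^ k = exp (INR k * x).
Proof.
induction k as [|k IH]; simpl.
- rewrite Rmult_0_l exp_0. reflexivity.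
- rewrite IH -exp_plus. f_equal. destruct k; simpl; ring.
Qed.

Lemma exp_ge_pow7 z : 0 <= z -> (z / 7) ^ 7 <= exp z.
Proof.
intros hz.
replace (exp z) with (exp (z / 7) ^ 7).
2: { rewrite exp_pow_nat. f_equal. simpl. field. }
apply pow_incr. split. lra. pose proof (exp_ineq1_le (z/7)). lra.
Qed.

Lemma rpow_facts (n : nat) : (0 < n)%nat ->
  let r := Rpower (INR n) (1/3) in 0 < r /\ r ^ 3 = INR n /\ Rpower (INR n) (- (1/3)) = / r.
Proof.
intros hn r.
assert (hn' : 0 < INR n) by (apply lt_0_INR; lia).
split; [unfold r, Rpower; apply exp_pos|].
split.
- unfold r. rewrite -Rpower_pow; last by rewrite /Rpower; apply: exp_pos.
  rewrite Rpower_mult. replace (1/3 * INR 3) with 1 by (simpl; field).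
  apply Rpower_1; exact hn'.
- apply Rpower_Ropp.
Qed.

Lemma real_part (alpha : R) : 0 < alpha <= 1 ->
  exists R0 : R, 1 <= R0 /\ forall r : R, R0 <= r ->
    forall J : nat, alpha * r ^ 2 / 2 - 1 < INR J -> INR J <= alpha * r ^ 2 / 2 ->
    INR J <= r ^ 3 /\
    4 * (r ^ 3) ^ 2 * (2 * r ^ 3 - INR J) ^ J < (2 * r ^ 3) ^ J.
Proof.
intros ha.
set (c := (alpha ^ 2 / 224) ^ 7).
assert (hc : 0 < c) by (unfold c; apply pow_lt; nra).
exists (4 / c + 4 / alpha + 1).
split.
{ assert (0 < 4 / c) by (apply Rdiv_lt_0_compat; lra).
  assert (0 < 4 / alpha) by (apply Rdiv_lt_0_compat; lra). lra. }
intros r hr J hJ1 hJ2.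
assert (h4c : 0 < 4 / c) by (apply Rdiv_lt_0_compat; lra).
assert (h4a : 0 < 4 / alpha) by (apply Rdiv_lt_0_compat; lra).
assert (r1 : 1 <= r) by lra.
assert (rc : 4 < c * r).
{ assert (c * (4 / c) = 4) by (field; lra). nra. }
assert (ra : 4 <= alpha * r).
{ assert (alpha * (4 / alpha) = 4) by (field; lra). nra. }
set (n := r ^ 3).
assert (hn : 1 <= n) by (unfold n; replace 1 with (1 ^ 3) by ring; apply pow_incr; lra).
assert (hr2 : r ^ 2 <= n) by (unfold n; simpl; nra).
assert (hJ0 : 0 <= INR J) by apply pos_INR.
assert (hJn : INR J <= n) by nra.
split; [exact hJn|].
set (y := INR J / (2 * n)).
assert (hy0 : 0 <= y) by (unfold y; apply Rmult_le_pos; [lra | left; apply Rinv_0_lt_compat; lra]).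
assert (hy1 : y <= 1/2) by (unfold y; apply Rmult_le_reg_r with (2 * n); [lra|]; field_simplify; lra).
assert (e1 : 2 * n - INR J = 2 * n * (1 - y)) by (unfold y; field; lra).
rewrite e1 Rpow_mult_distr.
assert (hp : 0 < (2 * n) ^ J) by (apply pow_lt; lra).
assert (key : 4 * n ^ 2 * (1 - y) ^ J < 1).
2: { nra. }
assert (b1 : (1 - y) ^ J <= exp (- y) ^ J).
{ apply pow_incr. split. lra. pose proof (exp_ineq1_le (- y)). lra. }
rewrite exp_pow_nat in b1.
set (z := alpha ^ 2 * r / 32).
assert (hJq : alpha * r ^ 2 / 4 <= INR J) by nra.
assert (hz : z <= INR J * y).
{ unfold z, y. apply Rmult_le_reg_r with (2 * n). lra.
  replace (INR J * (INR J / (2 * n)) * (2 * n)) with (INR J * INR J) by (field; lra).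
  assert (alpha * r ^ 2 / 4 * (alpha * r ^ 2 / 4) <= INR J * INR J).
  { apply Rmult_le_compat; nra. }
  unfold n. replace (alpha ^ 2 * r / 32 * (2 * r ^ 3)) with (alpha * r ^ 2 / 4 * (alpha * r ^ 2 / 4)) by field.
  lra. }
assert (b2 : exp (INR J * - y) <= exp (- z)).
{ destruct (Req_dec (INR J * - y) (- z)) as [e|e]; [rewrite e; lra|].
  left. apply exp_increasing. lra. }
assert (hz0 : 0 <= z) by (unfold z; nra).
assert (b3 : (z / 7) ^ 7 <= exp z) by (apply exp_ge_pow7; lra).
assert (ez : exp (- z) * exp z = 1) by (rewrite -exp_plus; replace (- z + z) with 0 by ring; apply exp_0).
assert (b4 : 4 * n ^ 2 < (z / 7) ^ 7).
{ replace ((z / 7) ^ 7) with (c * r ^ 7) by (unfold z, c; field).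
  unfold n. replace (4 * (r ^ 3) ^ 2) with (4 * r ^ 6) by ring.
  replace (c * r ^ 7) with ((c * r) * r ^ 6) by ring.
  assert (0 < r ^ 6) by (apply pow_lt; lra). nra. }
assert (0 < exp (- z)) by apply exp_pos.
assert (0 <= (1 - y) ^ J) by (apply pow_le; lra).
assert (4 * n ^ 2 * exp (- z) < 1).
{ assert (4 * n ^ 2 * exp (- z) < exp z * exp (- z)) by nra. nra. }
assert (0 < n ^ 2) by (apply pow_lt; lra).
nra.
Qed.

Lemma INR_muln a b : INR (a * b)%N = INR a * INR b.
Proof. exact: mult_INR. Qed.
Lemma INR_addn a b : INR (a + b)%N = INR a + INR b.
Proof. exact: plus_INR. Qed.
Lemma INR_subn a b : (b <= a)%N -> INR (a - b)%N = INR a - INR b.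
Proof. by move=> h; apply: minus_INR; apply/leP. Qed.
Lemma INR_expn a k : INR (a ^ k)%N = INR a ^ k.
Proof. elim: k => [|k IH] //; by rewrite expnS INR_muln IH. Qed.
Lemma INR_leq a b : (a <= b)%N -> INR a <= INR b.
Proof. by move/leP; apply: le_INR. Qed.
Lemma leq_INR a b : INR a <= INR b -> (a <= b)%N.
Proof. by move=> h; apply/leP; apply: INR_le. Qed.
Lemma ltn_INR a b : INR a < INR b -> (a < b)%N.
Proof. by move=> h; apply/ltP; apply: INR_lt. Qed.

Lemma sides (n m J : nat) (W A : {set 'I_n}) (d : R) :
  (0 < n)%N -> #|W| = m ->
  (n * #|W :&: A| <= m * #|A| + 2 * n * J)%N ->
  (n * #|W :&: ~: A| <= m * #|~: A| + 2 * n * J)%N ->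
  d * INR n <= INR #|A| ->
  d * INR m - 2 * INR J <= INR #|W :&: A| /\
  d * INR (n - m) - 2 * INR J <= INR #|~: W :&: A|.
Proof.
move=> n0 hW g1 g2 hd.
have h1 : (#|W :&: A| + #|W :&: ~: A| = m)%N by rewrite -setDE cardsID.
have h2 : (#|~: W :&: A| + #|W :&: A| = #|A|)%N.
  have e : A :&: W = W :&: A by rewrite setIC.
  have e' : A :\: W = ~: W :&: A by rewrite setDE setIC.
  by rewrite -(cardsID W A) e e' addnC.
have h3 : (#|A| + #|~: A| = n)%N by rewrite cardsC card_ord.
have mn : (m <= n)%N by rewrite -hW -[X in (_ <= X)%N](card_ord n) max_card.
rewrite INR_subn //.
move: (INR_leq g1) (INR_leq g2); rewrite !INR_addn !INR_muln.
have e1 := f_equal INR h1; have e2 := f_equal INR h2; have e3 := f_equal INR h3.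
rewrite !INR_addn in e1 e2 e3.
move: (INR #|W :&: A|) (INR #|W :&: ~: A|) (INR #|~: W :&: A|) (INR #|A|) (INR #|~: A|) e1 e2 e3 hd
  => x y z a a' e1 e2 e3 hd.
have hn : 0 < INR n by apply: lt_0_INR; apply/ltP.
have hm0 : 0 <= INR m by apply: pos_INR.
have hnm : INR m <= INR n by apply: INR_leq.
move=> G1 G2; rewrite /= in G1 G2.
split.
- apply: (Rmult_le_reg_l (INR n)) => //.
  have : INR m * (d * INR n) <= INR m * a by apply: Rmult_le_compat_l.
  nra.
- apply: (Rmult_le_reg_l (INR n)) => //.
  have : (INR n - INR m) * (d * INR n) <= (INR n - INR m) * a by apply: Rmult_le_compat_l; lra.
  nra.
Qed.

Lemma semideg_ind (n : nat) (E : rel 'I_n) (W : {set 'I_n}) (P : nat -> Prop) :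
  P #|W| -> (forall v, v \in W -> P (outdeg_in E W v) /\ P (indeg_in E W v)) ->
  P (semideg E W).
Proof.
move=> h0 h; rewrite /semideg; apply: big_ind => //.
- by move=> x y hx hy; rewrite /minn; case: ifP.
- by move=> v /h [h1 h2]; rewrite /minn; case: ifP.
Qed.

Lemma bigmin_le (T : finType) (P : pred T) (F : T -> nat) x0 v : P v ->
  (\big[minn/x0]_(i | P i) F i <= F v)%N.
Proof.
move=> hv; have : v \in index_enum T by rewrite mem_index_enum.
elim: (index_enum T) => [|a r IH] //; rewrite inE big_cons => /orP [/eqP <-|hr].
  by rewrite hv geq_minl.
case: (P a); last exact: IH.
by apply: leq_trans (geq_minr _ _) (IH hr).
Qed.

Lemma semideg_le (n : nat) (E : rel 'I_n) (W : {set 'I_n}) v : v \in W ->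
  (semideg E W <= outdeg_in E W v)%N /\ (semideg E W <= indeg_in E W v)%N.
Proof.
move=> hv; rewrite /semideg.
have h := bigmin_le (fun u => minn (outdeg_in E W u) (indeg_in E W u)) #|W| hv.
split; apply: leq_trans h _; [exact: geq_minl | exact: geq_minr].
Qed.

Unset Implicit Arguments.
Theorem proposition2p3 (alpha : R) (halpha : 0 < alpha <= 1) :
  exists n0 : nat, forall (n m : nat), (n0 <= n)%nat ->
    alpha * INR n <= INR m <= INR n / 2 ->
    forall (E : rel 'I_n) (delta : R), loopless E ->
      0 < delta < 1 ->
      delta * INR n <= INR (semideg E setT) ->
      exists W : {set 'I_n},
        #|W| = m /\
        delta - 2 * Rpower (INR n) (- (1 / 3)) <= INR (semideg E W) / INR m /\
        delta - 2 * Rpower (INR n) (- (1 / 3)) <= INR (semideg E (~: W)) / INR (n - m).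
Proof.
have [R0 [hR0 HR]] := real_part halpha.
have [N0 [_ hN0]] : exists N0 : nat, INR N0 <= R0 ^ 3 < INR N0 + 1.
  apply: floorR; apply: pow_le; lra.
exists N0.+1 => n m hn [hm1 hm2] E delta _ hd hsemi.
have hnR : R0 ^ 3 < INR n.
  apply: (Rlt_le_trans _ _ _ (Rlt_le_trans _ _ _ hN0 (Rle_refl _))).
  rewrite -S_INR; apply: le_INR; exact/leP.
have h13 : 1 <= R0 ^ 3.
  rewrite -(pow1 3); apply: pow_incr; lra.
have n0 : (0 < n)%N by apply: ltn_INR; rewrite /=; lra.
have [rpos [r3 rinv]] := rpow_facts n0.
move: rpos r3 rinv; set r := Rpower (INR n) (1 / 3) => rpos r3 rinv.
rewrite rinv.
have hr : R0 <= r.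
  apply: Rnot_lt_le => hlt.
  have a1 : r * r < R0 * R0 by nra.
  have a2 : r * r * r < R0 * R0 * R0 by nra.
  have : r ^ 3 < R0 ^ 3.
    have -> : r ^ 3 = r * r * r by ring.
    have -> : R0 ^ 3 = R0 * R0 * R0 by ring.
    exact: a2.
  lra.
have [J [hJ1 hJ2]] : exists J : nat, INR J <= alpha * r ^ 2 / 2 < INR J + 1.
  apply: floorR; have : 0 < r ^ 2 by apply: pow_lt.
  move=> ?; apply: Rmult_le_pos; [apply: Rmult_le_pos; lra | lra].
have [hJn hbig] := HR r hr J ltac:(lra) hJ1.
rewrite r3 in hJn hbig.
have Jn : (J <= n)%N by apply: leq_INR.
have m2n : (2 * m <= n)%N by apply: leq_INR; rewrite INR_muln /=; lra.
have mn : (m <= n)%N by lia.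
have hnat : (4 * n * m.+1 * (2 * n - J) ^ J < (2 * n) ^ J)%N.
  apply: ltn_INR.
  rewrite !INR_muln !INR_expn INR_subn; last by lia.
  rewrite INR_muln (S_INR m).
  rewrite (_ : INR 4 = 4); last by rewrite /=; ring.
  rewrite (_ : INR 2 = 2); last by rewrite /=; ring.
  have hm1' : INR m + 1 <= INR n by rewrite -S_INR; apply: INR_leq; lia.
  have hx : 0 <= (2 * INR n - INR J) ^ J by apply: pow_le; lra.
  have hn' : 0 < INR n by apply: lt_0_INR; apply/ltP.
  have : 4 * INR n * (INR m + 1) * (2 * INR n - INR J) ^ J <=
         4 * INR n ^ 2 * (2 * INR n - INR J) ^ J.
    apply: Rmult_le_compat_r => //.
    have -> : INR n ^ 2 = INR n * INR n by ring.
    nra.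
  lra.
have [W [hW good]] := exists_good E n0 mn Jn hnat.
exists W; split => //.
have hn' : 0 < INR n by apply: lt_0_INR; apply/ltP.
have hmpos : 0 < INR m by nra.
have hJr : INR J * r <= INR m.
  have : alpha * INR n = alpha * r ^ 3 by rewrite r3.
  move=> e; have : INR J * r <= alpha * r ^ 2 / 2 * r by apply: Rmult_le_compat_r; lra.
  rewrite /= in e *; nra.
have hnm : INR m <= INR (n - m) by rewrite INR_subn //; lra.
have hJr' : INR J * r <= INR (n - m) by lra.
have hJ0 : 0 <= INR J by apply: pos_INR.
have degT : forall v, delta * INR n <= INR #|[set u | E v u]| /\ delta * INR n <= INR #|[set u | E u v]|.
  move=> v; have [h1 h2] := semideg_le E (in_setT v).
  have e1 : outdeg_in E setT v = #|[set u | E v u]|.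
    by rewrite /outdeg_in; apply: eq_card => u; rewrite !inE.
  have e2 : indeg_in E setT v = #|[set u | E u v]|.
    by rewrite /indeg_in; apply: eq_card => u; rewrite !inE.
  rewrite -e1 -e2; split; apply: (Rle_trans _ _ _ hsemi); exact: INR_leq.
have key : forall (X : {set 'I_n}) (A : {set 'I_n}), (X = W \/ X = ~: W) ->
    (n * #|W :&: A| <= m * #|A| + 2 * n * J)%N ->
    (n * #|W :&: ~: A| <= m * #|~: A| + 2 * n * J)%N ->
    delta * INR n <= INR #|A| ->
    (delta - 2 * / r) * INR #|X| <= INR #|X :&: A|.
  move=> X A hX g1 g2 hA.
  have [s1 s2] := sides n0 hW g1 g2 hA.
  case: hX => ->.
    rewrite hW; apply: (Rle_trans _ _ _ _ s1).
    have : 2 * / r * INR m >= 2 * INR J.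
      apply: Rle_ge; apply: (Rmult_le_reg_l r) => //.
      have -> : r * (2 * / r * INR m) = 2 * INR m by field; lra.
      lra.
    lra.
  have -> : #|~: W| = (n - m)%N by rewrite cardsCs setCK card_ord hW.
  apply: (Rle_trans _ _ _ _ s2).
  have : 2 * / r * INR (n - m) >= 2 * INR J.
    apply: Rle_ge; apply: (Rmult_le_reg_l r) => //.
    have -> : r * (2 * / r * INR (n - m)) = 2 * INR (n - m) by field; lra.
    lra.
  lra.
have final : forall X : {set 'I_n}, (X = W \/ X = ~: W) ->
    (delta - 2 * / r) * INR #|X| <= INR (semideg E X).
  move=> X hX.
  apply: (semideg_ind (P := fun x => (delta - 2 * / r) * INR #|X| <= INR x)).
    have : 0 <= / r by left; apply: Rinv_0_lt_compat.
    have : 0 <= INR #|X| by apply: pos_INR.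
    nra.
  move=> v hv.
  have [o i] := degT v.
  have eo : outdeg_in E X v = #|X :&: [set u | E v u]|.
    by rewrite /outdeg_in; apply: eq_card => u; rewrite !inE.
  have ei : indeg_in E X v = #|X :&: [set u | E u v]|.
    by rewrite /indeg_in; apply: eq_card => u; rewrite !inE.
  rewrite eo ei; split; apply: key => //.
  - exact: (good (v, true, true)).
  - exact: (good (v, true, false)).
  - exact: (good (v, false, true)).
  - exact: (good (v, false, false)).
split.
- have := final W (or_introl erefl); rewrite hW => h.
  apply: (Rmult_le_reg_r (INR m)) => //.
  have -> : INR (semideg E W) / INR m * INR m = INR (semideg E W) by field; lra.
  exact: h.
- have := final (~: W) (or_intror erefl).
  have -> : #|~: W| = (n - m)%N by rewrite cardsCs setCK card_ord hW.
  move=> h.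
  apply: (Rmult_le_reg_r (INR (n - m))); first lra.
  have -> : INR (semideg E (~: W)) / INR (n - m) * INR (n - m) = INR (semideg E (~: W)) by field; lra.
  exact: h.
Qed.
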